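(* Let $\mathbb{A}$ be a 2-category and $p:e\to b$ a 1-cell such that $\mathbb{A}$ has the two-dimensional cokernel diagram of $p$ and $p$ has a codensity monad, i.e. a right Kan extension $(t,\gamma)$ of $p$ along $p$ exists. Then there is a unique 1-cell $\ell:b\uparrow_p b\to b$ such that $\ell\delta^0=\mathrm{id}_b$, $\ell\delta^1=t$ and $\mathrm{id}_\ell\ast\alpha=\gamma$; moreover the right Kan extension of $\mathrm{id}_b$ along $\delta^0$ exists and is given by the pair $(\ell,\mathrm{id}_{\mathrm{id}_b})$.
   Context: A 2-category is a $\mathbf{Cat}$-enriched category; composition of 1-cells is juxtaposition, vertical composition of 2-cells is $\cdot$, horizontal composition is $\ast$, $\mathrm{id}_f$ is the identity 2-cell on $f$. Opcomma object of $p$ along itself: an object $b\uparrow_p b$ with 1-cells $\delta^0,\delta^1:b\to b\uparrow_p b$ and a 2-cell $\alpha:\delta^1p\Rightarrow\delta^0p$ such that for every object $y$ the functor $h\mapsto(h\delta^0,h\delta^1,\mathrm{id}_h\ast\alpha)$, $\xi\mapsto(\xi\ast\mathrm{id}_{\delta^0},\xi\ast\mathrm{id}_{\delta^1})$ is an isomorphism from $\mathbb{A}(b\uparrow_p b,y)$ onto the category of triples $(h_0,h_1:b\to y,\ \beta:h_1p\Rightarrow h_0p)$ with morphisms pairs of 2-cells $(\xi_0:h_0\Rightarrow h_0',\xi_1:h_1\Rightarrow h_1')$ satisfying $(\xi_0\ast\mathrm{id}_p)\cdot\beta=\beta'\cdot(\xi_1\ast\mathrm{id}_p)$. Two-dimensional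 pushout of a span $f_0:c\to c_0$, $f_1:c\to c_1$: an object $P$ with $q_0:c_0\to P$, $q_1:c_1\to P$, $q_0f_0=q_1f_1$, such that for every $y$, $k\mapsto(kq_0,kq_1)$ is an isomorphism from $\mathbb{A}(P,y)$ onto the category of pairs $(k_0,k_1)$ with $k_0f_0=k_1f_1$, whose morphisms are pairs of 2-cells $(\xi_0,\xi_1)$ with $\xi_0\ast\mathrm{id}_{f_0}=\xi_1\ast\mathrm{id}_{f_1}$. $\mathbb{A}$ has the two-dimensional cokernel diagram of $p$ if it has an opcomma object $b\uparrow_p b$ of $p$ along itself and a two-dimensional pushout $b\uparrow_pb\uparrow_pb$ of the span $(\delta^0,\delta^1)$, with 1-cells $D^0,D^2:b\uparrow_pb\to b\uparrow_pb\uparrow_pb$ satisfying $D^2\delta^0=D^0\delta^1$. Right Kan extension of $f:z\to y$ along $g:z\to x$: a pair $(r:x\to y,\gamma:rg\Rightarrow f)$ such that for each $k:x\to y$, $\beta\mapsto\gamma\cdot(\beta\ast\mathrm{id}_g)$ is a bijection from 2-cells $k\Rightarrow r$ to 2-cells $kg\Rightarrow f$. *)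

(* Defs.v *)
(* A strict 2-category is presented with 2-cells carrying explicit
   boundaries (source/target 1-cells); vertical and horizontal composition
   are total operations whose axioms are only imposed on composable
   pairs.  This is equivalent to a Cat-enriched category: the hom-category
   Hom(a,b) has objects [Hom a b] and morphisms f => g the cells [c] with
   [src c = f] and [tgt c = g]; [comp]/[hcomp] give the composition functor. *)

Set Implicit Arguments.
Unset Strict Implicit.

Record TwoCat := {
  Ob : Type;
  Hom : Ob -> Ob -> Type;
  Cell : Ob -> Ob -> Type;
  src : forall a b, Cell a b -> Hom a b;
  tgt : forall a b, Cell a b -> Hom a b;
  idm : forall a, Hom a a;
  comp : forall a b c, Hom b c -> Hom a b -> Hom a c;
  id2 : forall a b, Hom a b -> Cell a b;
  (* vcomp beta alpha = beta . alpha : first alpha then beta *)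
  vcomp : forall a b, Cell a b -> Cell a b -> Cell a b;
  hcomp : forall a b c, Cell b c -> Cell a b -> Cell a c;

  comp_assoc : forall a b c d (h : Hom c d) (g : Hom b c) (f : Hom a b),
      comp h (comp g f) = comp (comp h g) f;
  comp_idl : forall a b (f : Hom a b), comp (idm b) f = f;
  comp_idr : forall a b (f : Hom a b), comp f (idm a) = f;

  src_id2 : forall a b (f : Hom a b), src (id2 f) = f;
  tgt_id2 : forall a b (f : Hom a b), tgt (id2 f) = f;
  src_vcomp : forall a b (x y : Cell a b), tgt x = src y -> src (vcomp y x) = src x;
  tgt_vcomp : forall a b (x y : Cell a b), tgt x = src y -> tgt (vcomp y x) = tgt y;
  vcomp_idl : forall a b (x : Cell a b), vcomp (id2 (tgt x)) x = x;
  vcomp_idr : forall a b (x : Cell a b), vcomp x (id2 (src x)) = x;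
  vcomp_assoc : forall a b (x y z : Cell a b),
      tgt x = src y -> tgt y = src z ->
      vcomp z (vcomp y x) = vcomp (vcomp z y) x;

  src_hcomp : forall a b c (y : Cell b c) (x : Cell a b),
      src (hcomp y x) = comp (src y) (src x);
  tgt_hcomp : forall a b c (y : Cell b c) (x : Cell a b),
      tgt (hcomp y x) = comp (tgt y) (tgt x);
  hcomp_id2 : forall a b c (g : Hom b c) (f : Hom a b),
      hcomp (id2 g) (id2 f) = id2 (comp g f);
  interchange : forall a b c (x x' : Cell a b) (y y' : Cell b c),
      tgt x = src x' -> tgt y = src y' ->
      hcomp (vcomp y' y) (vcomp x' x) = vcomp (hcomp y' x') (hcomp y x);
  hcomp_assoc : forall a b c d (z : Cell c d) (y : Cell b c) (x : Cell a b),
      hcomp z (hcomp y x) = hcomp (hcomp z y) x;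
  hcomp_idl : forall a b (x : Cell a b), hcomp (id2 (idm b)) x = x;
  hcomp_idr : forall a b (x : Cell a b), hcomp x (id2 (idm a)) = x
}.

Arguments Hom {t}.
Arguments Cell {t}.
Arguments src {t a b}.
Arguments tgt {t a b}.
Arguments idm {t}.
Arguments comp {t a b c}.
Arguments id2 {t a b}.
Arguments vcomp {t a b}.
Arguments hcomp {t a b c}.

Section Defs.
Variable A : TwoCat.

Definition cell2 {a b : Ob A} (x : Cell a b) (f g : Hom a b) : Prop :=
  src x = f /\ tgt x = g.

(* Opcomma object (P, d0, d1, alpha) of p : e -> b along itself,
   alpha : d1 p => d0 p, with the functor
   h |-> (h d0, h d1, id_h * alpha),  xi |-> (xi * id_d0, xi * id_d1)
   an isomorphism of categories (bijective on objects + fully faithful). *)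
Definition is_opcomma {e b : Ob A} (p : Hom e b)
    (P : Ob A) (d0 d1 : Hom b P) (alpha : Cell e P) : Prop :=
  cell2 alpha (comp d1 p) (comp d0 p) /\
  (forall (y : Ob A) (h0 h1 : Hom b y) (beta : Cell e y),
      cell2 beta (comp h1 p) (comp h0 p) ->
      exists! h : Hom P y,
        comp h d0 = h0 /\ comp h d1 = h1 /\ hcomp (id2 h) alpha = beta) /\
  (forall (y : Ob A) (h h' : Hom P y) (xi0 xi1 : Cell b y),
      cell2 xi0 (comp h d0) (comp h' d0) ->
      cell2 xi1 (comp h d1) (comp h' d1) ->
      vcomp (hcomp xi0 (id2 p)) (hcomp (id2 h) alpha)
        = vcomp (hcomp (id2 h') alpha) (hcomp xi1 (id2 p)) ->
      exists! xi : Cell P y,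
        cell2 xi h h' /\ hcomp xi (id2 d0) = xi0 /\ hcomp xi (id2 d1) = xi1).

Definition is_2pushout {c c0 c1 : Ob A} (f0 : Hom c c0) (f1 : Hom c c1)
    (P : Ob A) (q0 : Hom c0 P) (q1 : Hom c1 P) : Prop :=
  comp q0 f0 = comp q1 f1 /\
  (forall (y : Ob A) (k0 : Hom c0 y) (k1 : Hom c1 y),
      comp k0 f0 = comp k1 f1 ->
      exists! k : Hom P y, comp k q0 = k0 /\ comp k q1 = k1) /\
  (forall (y : Ob A) (k k' : Hom P y) (xi0 : Cell c0 y) (xi1 : Cell c1 y),
      cell2 xi0 (comp k q0) (comp k' q0) ->
      cell2 xi1 (comp k q1) (comp k' q1) ->
      hcomp xi0 (id2 f0) = hcomp xi1 (id2 f1) ->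
      exists! xi : Cell P y,
        cell2 xi k k' /\ hcomp xi (id2 q0) = xi0 /\ hcomp xi (id2 q1) = xi1).

Definition is_ran {x y z : Ob A} (f : Hom z y) (g : Hom z x)
    (r : Hom x y) (gam : Cell z y) : Prop :=
  cell2 gam (comp r g) f /\
  (forall (k : Hom x y) (dlt : Cell z y),
      cell2 dlt (comp k g) f ->
      exists! beta : Cell x y,
        cell2 beta k r /\ vcomp gam (hcomp beta (id2 g)) = dlt).

End Defs.

Arguments cell2 {A a b} x f g.
Arguments is_opcomma {A e b} p P d0 d1 alpha.
Arguments is_2pushout {A c c0 c1} f0 f1 P q0 q1.
Arguments is_ran {A x y z} f g r gam.

(* Main.v *)
Require Import Defs.
From Stdlib Require Import Setoid.

Lemma whisk_nat (A : TwoCat) (e b P : Ob A) (p : Hom e b) (d0 d1 : Hom b P)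
  (alpha : Cell e P) (k l : Hom P b) (beta : Cell P b) :
  cell2 alpha (comp d1 p) (comp d0 p) -> cell2 beta k l ->
  vcomp (hcomp (hcomp beta (id2 d0)) (id2 p)) (hcomp (id2 k) alpha)
  = vcomp (hcomp (id2 l) alpha) (hcomp (hcomp beta (id2 d1)) (id2 p)).
Proof.
  intros [sa ta] [sb tb].
  rewrite <- !hcomp_assoc, !hcomp_id2.
  rewrite <- !interchange.
  - rewrite <- sb at 1. rewrite vcomp_idr.
    rewrite <- ta at 1. rewrite vcomp_idl.
    rewrite <- tb at 1. rewrite vcomp_idl.
    rewrite <- sa, vcomp_idr. reflexivity.
  - rewrite ?src_id2, ?tgt_id2; auto.
  - rewrite ?src_id2, ?tgt_id2; auto.
  - rewrite ?src_id2, ?tgt_id2; auto.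
  - rewrite ?src_id2, ?tgt_id2; auto.
Qed.

Theorem proposition4p1 (A : TwoCat) (e b : Ob A) (p : Hom e b)
    (* opcomma object b ↑_p b *)
    (P : Ob A) (d0 d1 : Hom b P) (alpha : Cell e P)
    (Hop : is_opcomma p P d0 d1 alpha)
    (* two-dimensional pushout b ↑_p b ↑_p b of the span (d0, d1) *)
    (Q : Ob A) (D0 D2 : Hom P Q)
    (Hpo : is_2pushout d0 d1 Q D2 D0)
    (* codensity monad: right Kan extension (t, gam) of p along p *)
    (t : Hom b b) (gam : Cell e b)
    (Hran : is_ran p p t gam) :
  exists l : Hom P b,
    (comp l d0 = idm b /\ comp l d1 = t /\ hcomp (id2 l) alpha = gam) /\
    (forall l' : Hom P b,
        comp l' d0 = idm b /\ comp l' d1 = t /\ hcomp (id2 l') alpha = gam ->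
        l' = l) /\
    is_ran (idm b) d0 l (id2 (idm b)).
Proof.
  destruct Hop as [Ha [H1 H2]].
  destruct Hran as [[sg tg] Hr].
  destruct (H1 b (idm b) t gam) as [l [[L0 [L1 La]] Lu]].
  { split; [exact sg|]. rewrite comp_idl. exact tg. }
  exists l. split; [tauto|]. split.
  { intros l' Hl'. symmetry. apply Lu. exact Hl'. }
  split.
  { split; [rewrite src_id2; auto | apply tgt_id2]. }
  intros k dlt [sd td].
  destruct Ha as [sa ta].
  set (dlt' := vcomp (hcomp dlt (id2 p)) (hcomp (id2 k) alpha)).
  assert (Hd' : cell2 dlt' (comp (comp k d1) p) p).
  { unfold dlt'. split.
    - rewrite src_vcomp.
      + rewrite src_hcomp, src_id2, sa. apply comp_assoc.
      + rewrite tgt_hcomp, src_hcomp, !tgt_id2, !src_id2, ta, sd. apply comp_assoc.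
    - rewrite tgt_vcomp.
      + rewrite tgt_hcomp, td, tgt_id2. apply comp_idl.
      + rewrite tgt_hcomp, src_hcomp, !tgt_id2, !src_id2, ta, sd. apply comp_assoc. }
  destruct (Hr _ _ Hd') as [xi1 [[[sx tx] Ex] Xu]].
  assert (Hc0 : cell2 dlt (comp k d0) (comp l d0)) by (split; congruence).
  assert (Hc1 : cell2 xi1 (comp k d1) (comp l d1)) by (split; congruence).
  assert (Heq : vcomp (hcomp dlt (id2 p)) (hcomp (id2 k) alpha)
        = vcomp (hcomp (id2 l) alpha) (hcomp xi1 (id2 p))).
  { rewrite La. exact (eq_sym Ex). }
  destruct (H2 b k l dlt xi1 Hc0 Hc1 Heq) as [bt [[Cb [B0 B1]] Bu]].
  exists bt. split.
  { split; [exact Cb|]. rewrite B0. rewrite <- td at 1. apply vcomp_idl. }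
  intros beta' [Cb' Eb'].
  assert (E0 : hcomp beta' (id2 d0) = dlt).
  { rewrite <- Eb'. destruct Cb' as [sb' tb'].
    rewrite <- L0.
    replace (comp l d0) with (tgt (hcomp beta' (id2 d0)))
      by (rewrite tgt_hcomp, tgt_id2, tb'; reflexivity).
    symmetry. apply vcomp_idl. }
  apply Bu. destruct Cb' as [sb' tb'].
  split; [split; assumption|]. split; [exact E0|].
  symmetry. apply Xu. split.
  - split.
    + rewrite src_hcomp, src_id2, sb'. reflexivity.
    + rewrite tgt_hcomp, tgt_id2, tb'. exact L1.
  - unfold dlt'. rewrite <- E0. rewrite <- La.
    symmetry. apply whisk_nat; split; assumption.
Qed.
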